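(* Let $m$ be an even positive integer. The collection of right cosets $\{\Gamma_0(2)^+\gamma:\gamma\in M_1^m\}$ is closed under right multiplication by elements of $\Gamma_0(2)$: for every $\gamma\in M_1^m$ and $\delta\in\Gamma_0(2)$ there is $\gamma'\in M_1^m$ with $\Gamma_0(2)^+\gamma\delta=\Gamma_0(2)^+\gamma'$.
   Context: Matrices are in $GL_2^+(\mathbb{R})$ considered up to sign; $\Gamma_0(2)=\{\begin{bmatrix}a&b\\c&d\end{bmatrix}\in SL_2(\mathbb{Z}): c\equiv0\pmod 2\}$, $w_2=2^{-1/2}\begin{bmatrix}0&-1\\2&0\end{bmatrix}$, $\Gamma_0(2)^+$ is the group generated by $\Gamma_0(2)$ and $w_2$. $M_1^m=\{\begin{bmatrix}x&y\\0&z\end{bmatrix}: x,y,z\in\mathbb{Z},\ x,z>0,\ xz=m,\ 0\leq y<z,\ \gcd(x,y,z)=1,\ x\text{ odd}\}$. *)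

(* Defs.v *)
From HB Require Import structures.
From mathcomp Require Import all_boot all_order all_algebra.
From mathcomp Require Import reals.
Set Implicit Arguments. Unset Strict Implicit. Unset Printing Implicit Defensive.
Import Order.TTheory GRing.Theory Num.Theory.
Local Open Scope ring_scope.

Definition mx2 (R : nzRingType) (a b c d : R) : 'M[R]_2 :=
  \matrix_(i < 2, j < 2)
    if i == 0 then (if j == 0 then a else b) else (if j == 0 then c else d).

Definition Gamma0_2 (R : realType) (A : 'M[R]_2) : Prop :=
  exists a b c d : int,
    [/\ A = mx2 a%:~R b%:~R c%:~R d%:~R, a * d - b * c = 1 & (2 %| c)%Z].

Definition w2 (R : realType) : 'M[R]_2 :=
  (Num.sqrt (2 : R))^-1 *: mx2 0 (-1) 2 0.

Inductive Gamma0_2plus (R : realType) : 'M[R]_2 -> Prop :=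
| G0p_gen A : Gamma0_2 A -> Gamma0_2plus A
| G0p_w2 : Gamma0_2plus (w2 R)
| G0p_mul A B : Gamma0_2plus A -> Gamma0_2plus B -> Gamma0_2plus (A *m B)
| G0p_inv A : Gamma0_2plus A -> Gamma0_2plus (invmx A).

(* membership of X in the right coset G g, matrices considered up to sign *)
Definition in_rcoset (R : realType) (G : 'M[R]_2 -> Prop) (g X : 'M[R]_2) : Prop :=
  exists h, G h /\ (X = h *m g \/ X = - (h *m g)).

Definition M1 (R : realType) (m : nat) (g : 'M[R]_2) : Prop :=
  exists x y z : nat,
    [/\ (0 < x)%N, (0 < z)%N, (x * z)%N = m & (y < z)%N] /\
    [/\ gcdn (gcdn x y) z = 1%N, odd x & g = mx2 x%:R y%:R 0 z%:R].

(* Main.v *)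
Require Import Defs.
From HB Require Import structures.
From mathcomp Require Import all_boot all_order all_algebra.
From mathcomp Require Import reals zify ring lra.
Import Order.TTheory GRing.Theory Num.Theory.
Local Open Scope ring_scope.

Lemma mx2_mul (R : comNzRingType) (a b c d a' b' c' d' : R) :
  mx2 a b c d *m mx2 a' b' c' d' =
  mx2 (a * a' + b * c') (a * b' + b * d') (c * a' + d * c') (c * b' + d * d').
Proof.
apply/matrixP => i j; rewrite !mxE !big_ord_recl big_ord0 !mxE /=.
by case: i => [[|[|i]] Hi]; case: j => [[|[|j]] Hj] //=; rewrite addr0.
Qed.

Lemma mx2_1 (R : comNzRingType) : mx2 (1 : R) 0 0 1 = 1%:M.
Proof.
apply/matrixP => i j; rewrite !mxE.
by case: i => [[|[|i]] Hi]; case: j => [[|[|j]] Hj].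
Qed.

Lemma mx2_mulz (R : comNzRingType) (a b c d a' b' c' d' : int) :
  mx2 (a%:~R : R) b%:~R c%:~R d%:~R *m mx2 a'%:~R b'%:~R c'%:~R d'%:~R =
  mx2 (a * a' + b * c')%:~R (a * b' + b * d')%:~R (c * a' + d * c')%:~R (c * b' + d * d')%:~R.
Proof. by rewrite mx2_mul !intrD !intrM. Qed.

Lemma int_par (n : int) : (exists k, n = 2 * k) \/ (exists k, n = 2 * k + 1).
Proof.
have := divz_eq n 2; have := modz_ge0 n (isT : (2:int) != 0).
have := ltz_mod n (isT : (2:int) != 0).
case: (modz n 2 =P 0) => H0.
  by move=> _ _ E; left; exists (divz n 2); lia.
move=> _ _ E; right; exists (divz n 2).
have : modz n 2 = 1 by lia.
lia.
Qed.
Theorem lemma2p4 (R : realType) (m : nat) (m_gt0 : (0 < m)%N) (m_even : ~~ odd m)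
    (gamma delta : 'M[R]_2) (hgamma : M1 m gamma) (hdelta : Gamma0_2 delta) :
  exists gamma' : 'M[R]_2, M1 m gamma' /\
    forall X : 'M[R]_2,
      in_rcoset (@Gamma0_2plus R) (gamma *m delta) X <->
      in_rcoset (@Gamma0_2plus R) gamma' X.
Proof.
case: hgamma => x [y [z [[x0 z0 xzm yz] [gxyz xodd ->]]]].
case: hdelta => p [q [r [s [-> hdet /dvdzP [r0 hr0]]]]].
have zev : ~~ odd z by move: m_even; rewrite -xzm oddM xodd.
have [x1 hx1] : exists x1 : int, Posz x = 2 * x1 + 1.
  by exists (Posz x./2); move: (odd_double_half x); rewrite xodd; lia.
have [z1 hz1] : exists z1 : int, Posz z = 2 * z1.
  by exists (Posz z./2); move: (odd_double_half z); rewrite (negbTE zev); lia.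
set a := Posz x * p + Posz y * r.
set b := Posz x * q + Posz y * s.
set c := Posz z * r.
set d := Posz z * s.
have -> : mx2 (x%:R : R) y%:R 0 z%:R *m mx2 p%:~R q%:~R r%:~R s%:~R
   = mx2 a%:~R b%:~R c%:~R d%:~R.
  have -> : mx2 (x%:R : R) y%:R 0 z%:R = mx2 (Posz x)%:~R (Posz y)%:~R (0:int)%:~R (Posz z)%:~R by [].
  by rewrite mx2_mulz !mul0r !add0r.
have [A hA] : exists A, a = 2 * A + 1.
  case: (int_par p) => [[P hP]|[P hP]].
    by exfalso; move: hdet; rewrite hP hr0; lia.
  exists (2 * x1 * P + x1 + P + Posz y * r0).
  by rewrite /a hx1 hP hr0; ring.
set e := gcdz a c.
have [u [v huv]] := Bezoutz a c.
have [a1 ha1] : exists a1, a = a1 * e by apply/dvdzP; apply: dvdz_gcdl.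
have [c1 hc1] : exists c1, c = c1 * e by apply/dvdzP; apply: dvdz_gcdr.
have [k0 hk0] : exists k0, e = 2 * k0 + 1.
  case: (int_par e) => [[k hk]|//].
  by exfalso; move: hA; rewrite ha1 hk; lia.
have e0 : 0 < e.
  have : 0 <= e by rewrite /e /gcdz.
  lia.
have hu1 : u * a1 + v * c1 = 1.
  apply: (@mulIf _ e); first by lia.
  have huv' : u * a + v * c = e := huv.
  by rewrite mul1r -[in RHS]huv' ha1 hc1; ring.
have c1ev : c1 = 2 * (z1 * r - k0 * c1).
  by move: hc1; rewrite /c hz1 hk0; lia.
have hm : a * d - b * c = Posz m.
  transitivity (Posz x * Posz z * (p * s - q * r)); first by rewrite /a /b /c /d; ring.
  by rewrite hdet mulr1 -PoszM xzm.
set z' := a1 * d - c1 * b.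
have ez : e * z' = Posz m by rewrite -hm /z' ha1 hc1; ring.
have z'0 : 0 < z' by rewrite -(pmulr_rgt0 _ e0) ez; lia.
set b' := u * b + v * d.
set k := divz b' z'.
set y' := modz b' z'.
have hb' : b' = k * z' + y' by apply: divz_eq.
have y'0 : 0 <= y' by apply: modz_ge0; lia.
have y'z : y' < z' by have := ltz_mod b' (lt0r_neq0 z'0); lia.
pose g := mx2 (a1%:~R : R) (a1 * k - v)%:~R c1%:~R (c1 * k + u)%:~R.
pose gi := mx2 ((c1 * k + u)%:~R : R) (- (a1 * k - v))%:~R (- c1)%:~R a1%:~R.
pose h := mx2 (e%:~R : R) y'%:~R (0:int)%:~R z'%:~R.
have hb : b = a1 * y' + (a1 * k - v) * z'.
  have -> : a1 * y' + (a1 * k - v) * z' = a1 * b' - v * z' by rewrite hb'; ring.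
  by rewrite -[b]mulr1 -hu1 /b' /z'; ring.
have hd : d = c1 * y' + (c1 * k + u) * z'.
  have -> : c1 * y' + (c1 * k + u) * z' = c1 * b' + u * z' by rewrite hb'; ring.
  by rewrite -[d]mulr1 -hu1 /b' /z'; ring.
have Eg : mx2 a%:~R b%:~R c%:~R d%:~R = g *m h.
  rewrite /g /h mx2_mulz; congr mx2; congr intmul.
  - by rewrite ha1; ring.
  - by rewrite hb; ring.
  - by rewrite hc1; ring.
  - by rewrite hd; ring.
have Eh : gi *m g = 1%:M.
  rewrite /gi /g mx2_mulz -mx2_1.
  have -> : (c1 * k + u) * a1 + - (a1 * k - v) * c1 = 1 by rewrite -hu1; ring.
  have -> : (c1 * k + u) * (a1 * k - v) + - (a1 * k - v) * (c1 * k + u) = 0 by ring.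
  have -> : - c1 * a1 + a1 * c1 = 0 by ring.
  have -> : - c1 * (a1 * k - v) + a1 * (c1 * k + u) = 1 by rewrite -hu1; ring.
  by [].
have Gg : Gamma0_2 g.
  exists a1, (a1 * k - v), c1, (c1 * k + u); split => //.
    by rewrite -hu1; ring.
  by apply/dvdzP; exists (z1 * r - k0 * c1); rewrite mulrC.
have Ggi : Gamma0_2 gi.
  exists (c1 * k + u), (- (a1 * k - v)), (- c1), a1; split => //.
    by rewrite -hu1; ring.
  by apply/dvdzP; exists (- (z1 * r - k0 * c1)); lia.
rewrite Eg.
have he : e = Posz `|e|%N by lia.
have hy : y' = Posz `|y'|%N by lia.
have hz : z' = Posz `|z'|%N by lia.
exists h; split.
  exists `|e|%N, `|y'|%N, `|z'|%N; split; first split.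
  - lia.
  - lia.
  - by move: ez; rewrite he hz -PoszM; case.
  - lia.
  split; last first.
  - by rewrite /h he hy hz.
  - move: hk0; rewrite he; lia.
  set D := gcdn _ _.
  apply/eqP; rewrite -dvdn1 -gxyz !dvdn_gcd.
  have hDe : (Posz D %| e)%Z by rewrite he /D; apply: dvdn_trans (dvdn_gcdl _ _) (dvdn_gcdl _ _).
  have hDy : (Posz D %| y')%Z by rewrite hy /D; apply: dvdn_trans (dvdn_gcdl _ _) (dvdn_gcdr _ _).
  have hDz : (Posz D %| z')%Z by rewrite hz /D; apply: dvdn_gcdr.
  have hDa : (Posz D %| a)%Z by rewrite ha1; apply: dvdz_mull.
  have hDc : (Posz D %| c)%Z by rewrite hc1; apply: dvdz_mull.
  have hDb : (Posz D %| b)%Z by rewrite hb; apply: rpredD; apply: dvdz_mull.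
  have hDd : (Posz D %| d)%Z by rewrite hd; apply: rpredD; apply: dvdz_mull.
  have ex : Posz x = a * s - b * r.
    transitivity (Posz x * (p * s - q * r)); first by rewrite hdet mulr1.
    by rewrite /a /b; ring.
  have ey : Posz y = b * p - a * q.
    transitivity (Posz y * (p * s - q * r)); first by rewrite hdet mulr1.
    by rewrite /a /b; ring.
  have ezz : Posz z = d * p - c * q.
    transitivity (Posz z * (p * s - q * r)); first by rewrite hdet mulr1.
    by rewrite /c /d; ring.
  have h1 : (Posz D %| Posz x)%Z by rewrite ex; apply: rpredB; apply: dvdz_mulr.
  have h2 : (Posz D %| Posz y)%Z by rewrite ey; apply: rpredB; apply: dvdz_mulr.
  have h3 : (Posz D %| Posz z)%Z by rewrite ezz; apply: rpredB; apply: dvdz_mulr.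
  rewrite !dvdzE /= in h1 h2 h3; by rewrite h1 h2 h3.
move=> X; split.
  move=> [k1 [Gk1 E]]; exists (k1 *m g); split.
    by apply: G0p_mul => //; apply: G0p_gen.
  by rewrite -mulmxA.
move=> [k1 [Gk1 E]]; exists (k1 *m gi); split.
  by apply: G0p_mul => //; apply: G0p_gen.
by rewrite -!mulmxA (mulmxA gi g h) Eh mul1mx.
Qed.
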